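(* Let $(G,\precsim)$ be a compatible quasi-ordered abelian group and define the ternary relation $C$ on $G$ by: $C(x,y,z)$ holds iff $(x\neq y=z)\vee\big(x-z\in G^v\wedge y-z\precnsim x-z\big)\vee\big(y-z\in G^o\wedge x-z\in G^o\wedge 0\precnsim x-y\wedge 0\precnsim x-z\big)$. Then $C$ is a C-relation on $G$ compatible with $+$. Moreover, $\precsim$ is the only compatible quasi-order on $G$ inducing $C$ (via this formula), $C$ is definable by a quantifier-free formula in the language $\{0,+,-,\precsim\}$, and $\precsim$ is definable by a quantifier-free formula in the language $\{0,+,-,C\}$.
   Context: A compatible quasi-ordered abelian group is an abelian group $G$ with a total quasi-order $\precsim$ (reflexive, transitive, any two elements comparable) such that, writing $a\sim b$ for $a\precsim b\wedge b\precsim a$: $(Q_1)$ $x\sim0\Rightarrow x=0$; $(Q_2)$ $x\precsim y\wedge y\not\sim z\Rightarrow x+z\precsim y+z$. $a\precnsim b$ means $a\precsim b\wedge a\not\sim b$. With $cl(g)$ the $\sim$-class of $g$, $g$ is o-type if $cl(g)=\{g\}$ and $g$ is not of order $2$; $G^o$ is the set of o-type elements and $G^v=G\setminus G^o$. A C-relation on a set $M$ is a ternary relation $C$ satisfying: $(C_1)$ $C(x,y,z)\Rightarrow C(x,z,y)$; $(C_2)$ $C(x,y,z)\Rightarrow\neg C(y,x,z)$; $(C_3)$ $C(x,y,z)\Rightarrow C(w,y,z)\vee C(x,w,z)$; $(C_4)$ $x\neq y\Rightarrow C(x,y,y)$. It is compatible with $+$ if $C(x,y,z)\Rightarrow C(v+x+u,v+y+u,v+z+u)$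 for all $x,y,z,u,v$. *)

(* Defs.v *)
From HB Require Import structures.
From mathcomp Require Import all_boot all_algebra.
Set Implicit Arguments. Unset Strict Implicit. Unset Printing Implicit Defensive.
Import GRing.Theory.
Local Open Scope ring_scope.

Section QO.
Variables (G : zmodType) (le : G -> G -> Prop).

Definition qsim (a b : G) : Prop := le a b /\ le b a.
Definition qlt (a b : G) : Prop := le a b /\ ~ qsim a b.

Definition compatible_qo : Prop :=
  [/\ (forall x, le x x),
      (forall x y z, le x y -> le y z -> le x z),
      (forall x y, le x y \/ le y x),
      (forall x, qsim x 0 -> x = 0)
    & (forall x y z, le x y -> ~ qsim y z -> le (x + z) (y + z))].

Definition order2 (g : G) : Prop := g <> 0 /\ g + g = 0.

Definition o_type (g : G) : Prop := (forall h, qsim h g -> h = g) /\ ~ order2 g.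
Definition v_type (g : G) : Prop := ~ o_type g.

Definition Cind (x y z : G) : Prop :=
  (x <> y /\ y = z)
  \/ (v_type (x - z) /\ qlt (y - z) (x - z))
  \/ (o_type (y - z) /\ o_type (x - z) /\ qlt 0 (x - y) /\ qlt 0 (x - z)).
End QO.

Section CRel.
Variables (M : Type) (C : M -> M -> M -> Prop).
Definition C_relation : Prop :=
  [/\ (forall x y z, C x y z -> C x z y),
      (forall x y z, C x y z -> ~ C y x z),
      (forall x y z w, C x y z -> C w y z \/ C x w z)
    & (forall x y, x <> y -> C x y y)].
End CRel.

Definition C_compatible (G : zmodType) (C : G -> G -> G -> Prop) : Prop :=
  forall x y z u v, C x y z -> C (v + x + u) (v + y + u) (v + z + u).

Inductive term : Type :=
  | TVar of nat | TZero | TAdd of term & term | TOpp of term.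

Fixpoint teval (G : zmodType) (e : nat -> G) (t : term) : G :=
  match t with
  | TVar n => e n
  | TZero => 0
  | TAdd t1 t2 => teval e t1 + teval e t2
  | TOpp t1 => - teval e t1
  end.

Inductive qf (A : Type) : Type :=
  | QAtom of A | QNot of qf A | QAnd of qf A & qf A | QOr of qf A & qf A.

Fixpoint qf_holds (A : Type) (sem : A -> Prop) (f : qf A) : Prop :=
  match f with
  | QAtom a => sem a
  | QNot f1 => ~ qf_holds sem f1
  | QAnd f1 f2 => qf_holds sem f1 /\ qf_holds sem f2
  | QOr f1 f2 => qf_holds sem f1 \/ qf_holds sem f2
  end.

Inductive atomLe : Type := LEq of term & term | LLe of term & term.
Inductive atomC : Type := CEq of term & term | CC of term & term & term.

Definition semLe (G : zmodType) (le : G -> G -> Prop) (e : nat -> G) (a : atomLe) : Prop :=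
  match a with
  | LEq t1 t2 => teval e t1 = teval e t2
  | LLe t1 t2 => le (teval e t1) (teval e t2)
  end.

Definition semC (G : zmodType) (C : G -> G -> G -> Prop) (e : nat -> G) (a : atomC) : Prop :=
  match a with
  | CEq t1 t2 => teval e t1 = teval e t2
  | CC t1 t2 t3 => C (teval e t1) (teval e t2) (teval e t3)
  end.

Definition env (G : zmodType) (s : seq G) : nat -> G := fun n => nth 0 s n.

(* Main.v *)
Require Import Defs.
From mathcomp Require Import all_boot all_algebra.
From Stdlib Require Import Classical Setoid.
Import GRing.Theory.
Local Open Scope ring_scope.


Lemma qrefl {G : zmodType} {le : G -> G -> Prop} (Hc : compatible_qo le) (x : G) : le x x.
Proof. by case: Hc. Qed.
Lemma qtr {G : zmodType} {le : G -> G -> Prop} (Hc : compatible_qo le) {x y z : G} :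
  le x y -> le y z -> le x z.
Proof. by case: Hc => _ t _ _ _; apply: t. Qed.
Lemma qtot {G : zmodType} {le : G -> G -> Prop} (Hc : compatible_qo le) (x y : G) :
  le x y \/ le y x.
Proof. by case: Hc. Qed.
Lemma q1 {G : zmodType} {le : G -> G -> Prop} (Hc : compatible_qo le) {x : G} :
  le x 0 -> le 0 x -> x = 0.
Proof. by case: Hc => _ _ _ q _ a b; apply: q. Qed.
Lemma q2 {G : zmodType} {le : G -> G -> Prop} (Hc : compatible_qo le) {x y z : G} :
  le x y -> ~ qsim le y z -> le (x + z) (y + z).
Proof. by case: Hc => _ _ _ _ q; apply: q. Qed.

Definition Vt {G : zmodType} (le : G -> G -> Prop) (x : G) : Prop :=
  x <> 0 /\ (le x (-x) /\ le (-x) x).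

Lemma nle_le {G : zmodType} {le : G -> G -> Prop} (Hc : compatible_qo le) {x y : G} :
  ~ le x y -> le y x.
Proof. by case: (qtot Hc x y). Qed.

Lemma S1 {G : zmodType} {le : G -> G -> Prop} (Hc : compatible_qo le) {g h : G} :
  ~ qsim le g (-g) -> qsim le h g -> h = g.
Proof.
move=> ng [hg gh].
have nh : ~ qsim le h (-g).
  case=> a b; apply: ng; split. exact: (qtr Hc gh a). exact: (qtr Hc b hg).
have A := q2 Hc hg ng; rewrite subrr in A.
have B := q2 Hc gh nh; rewrite subrr in B.
apply: subr0_eq. exact (@q1 _ _ Hc _ A B).
Qed.

Lemma Vt_opp {G : zmodType} {le : G -> G -> Prop} {x : G} : Vt le x -> Vt le (-x).
Proof. case=> x0 [a b]; split; last by rewrite opprK.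
by move=> e; apply: x0; rewrite -[x]opprK e oppr0. Qed.

Lemma Vt_oppE {G : zmodType} {le : G -> G -> Prop} {x : G} : Vt le (-x) <-> Vt le x.
Proof. by split=> [/Vt_opp|/Vt_opp //]; rewrite opprK. Qed.

Lemma notV_ns {G : zmodType} {le : G -> G -> Prop} {g : G} :
  ~ Vt le g -> g <> 0 -> ~ qsim le g (-g).
Proof. by move=> nV g0 [a b]; apply: nV. Qed.

Lemma S2 {G : zmodType} {le : G -> G -> Prop} (Hc : compatible_qo le) {g h : G} :
  ~ Vt le g -> qsim le h g -> h = g.
Proof.
move=> nV hs; case: (classic (g = 0)) => g0.
  by subst g; case: hs => a b; exact (q1 Hc a b).
exact (S1 Hc (notV_ns nV g0) hs).
Qed.

Lemma F1 {G : zmodType} {le : G -> G -> Prop} (Hc : compatible_qo le) {x : G} :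
  le x 0 -> le 0 (-x).
Proof.
move=> h; case: (classic (x = 0)) => x0.
  by subst x; rewrite oppr0; apply: qrefl.
have ns : ~ qsim le 0 (-x).
  case=> a b; apply: x0; apply/eqP; rewrite -oppr_eq0; apply/eqP; exact (q1 Hc b a).
by have := q2 Hc h ns; rewrite subrr add0r.
Qed.

Lemma F2 {G : zmodType} {le : G -> G -> Prop} (Hc : compatible_qo le) {x : G} :
  le 0 x -> ~ qsim le x (-x) -> le (-x) 0.
Proof. by move=> h ns; have := q2 Hc h ns; rewrite subrr add0r. Qed.

Lemma VP {G : zmodType} {le : G -> G -> Prop} (Hc : compatible_qo le) {x : G} :
  Vt le x -> le 0 x.
Proof.
move=> [x0 [a b]]; apply: NNPP => n.
have := F1 Hc (nle_le Hc n) => c; exact: n (qtr Hc c b).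
Qed.

Lemma two_pos {G : zmodType} {le : G -> G -> Prop} (Hc : compatible_qo le) {d : G} :
  ~ Vt le d -> le 0 d -> d <> 0 -> le 0 (d + d) /\ d + d <> 0.
Proof.
move=> nV h d0; have ns := notV_ns nV d0; split.
  apply: NNPP => n; have l := nle_le Hc n.
  have nm : ~ qsim le 0 (-d).
    case=> a b; apply: d0; apply/eqP; rewrite -oppr_eq0; apply/eqP; exact (q1 Hc b a).
  have := q2 Hc l nm; rewrite addrK add0r => l2.
  by apply: (ns); split => //; exact (qtr Hc (F2 Hc h ns) h).
move=> e; apply: ns; have : d = -d by apply/eqP; rewrite -addr_eq0 e.
by move=> e2; rewrite -e2; split; exact (qrefl Hc d).
Qed.

Lemma two_neg {G : zmodType} {le : G -> G -> Prop} (Hc : compatible_qo le) {d : G} :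
  ~ Vt le d -> le d 0 -> d <> 0 -> le (d + d) 0 /\ d + d <> 0.
Proof.
move=> nV h d0; have ns := notV_ns nV d0; split.
  have nm : ~ qsim le 0 d by case=> a b; apply: d0; exact (q1 Hc b a).
  by have := q2 Hc h nm; rewrite add0r => l; exact (qtr Hc l h).
move=> e; apply: ns; have : d = -d by apply/eqP; rewrite -addr_eq0 e.
by move=> e2; rewrite -e2; split; exact (qrefl Hc d).
Qed.

Lemma bullet {G : zmodType} {le : G -> G -> Prop} (Hc : compatible_qo le) {a c : G} :
  qsim le a (-a) -> ~ qsim le (-a) c -> ~ qsim le a c -> qsim le (a + c) (-a + c).
Proof. by move=> [a1 a2] n1 n2; split; [exact (q2 Hc a1 n1) | exact (q2 Hc a2 n2)]. Qed.

Lemma qlt_le_trans {G : zmodType} {le : G -> G -> Prop} (Hc : compatible_qo le) {x y z : G} :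
  qlt le x y -> le y z -> qlt le x z.
Proof.
move=> [a b] c; split; first exact (qtr Hc a c).
by move=> [d e]; apply: b; split => //; exact (qtr Hc c e).
Qed.

Lemma le_qlt_trans {G : zmodType} {le : G -> G -> Prop} (Hc : compatible_qo le) {x y z : G} :
  le x y -> qlt le y z -> qlt le x z.
Proof.
move=> a [b c]; split; first exact (qtr Hc a b).
by move=> [d e]; apply: c; split => //; exact (qtr Hc e a).
Qed.

Lemma nqlt_le {G : zmodType} {le : G -> G -> Prop} (Hc : compatible_qo le) (x y : G) :
  ~ qlt le y x <-> le x y.
Proof.
split.
  move=> n; case: (qtot Hc x y) => // h; apply: NNPP => nxy; apply: n; split => //.
  by move=> [_ h']; exact: nxy h'.
by move=> l [a ns]; apply: ns; split.
Qed.

Lemma qlt0E {G : zmodType} {le : G -> G -> Prop} (Hc : compatible_qo le) (d : G) :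
  qlt le 0 d <-> le 0 d /\ d <> 0.
Proof.
split.
  move=> [a b]; split => // e; apply: b; rewrite e; split; exact (qrefl Hc 0).
move=> [a b]; split => // [[c e]]; apply: b; exact (q1 Hc e c).
Qed.

Lemma H0 {G : zmodType} {le : G -> G -> Prop} (Hc : compatible_qo le) (o v : G) :
  le 0 o -> ~ qsim le o (-o) -> Vt le v -> le v o ->
  [/\ v + v = 0, ~ le (o + v) o, le 0 (o + v), o + v <> 0 & ~ qsim le (o + v) (-(o + v))].
Proof.
move=> l0 ng Vv lvo; have Vv' := Vv; case: Vv' => v0 [v1 v2].
have vo : forall t, qsim le t o -> t = o by move=> t; exact (S1 Hc ng).
have nvo : ~ qsim le v o.
  by move=> /vo E; apply: ng; rewrite -E; split.
have nmvo : ~ qsim le (-v) o.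
  by move=> /vo E; apply: ng; rewrite -E opprK; split.
have a : le (v - o) 0 by have := q2 Hc lvo ng; rewrite subrr.
have vo_ne : v - o <> 0.
  by move=> /subr0_eq E; apply: nvo; rewrite E; split; exact (qrefl Hc o).
have nle : ~ le 0 (v - o) by move=> h; apply: vo_ne; exact (q1 Hc a h).
have b := bullet Hc (conj v1 v2) nmvo nvo.
have c : ~ qsim le (o - v) (-(o - v)).
  rewrite opprB => [[h1 h2]]; apply: nle; apply: (VP Hc).
  by split => //; rewrite opprB.
have d : v + o = o - v by apply: (S1 Hc c); rewrite [o - v]addrC.
have vv : v = - v by move: d; rewrite addrC => /addrI.
have vv0 : v + v = 0 by rewrite {2}vv subrr.
have mu : -(o + v) = v - o by rewrite opprD -vv addrC.
split => //.
- move=> h; have := q2 Hc h ng; rewrite subrr [o + v]addrC addrK => l.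
  by apply: v0; exact (q1 Hc l (VP Hc Vv)).
- by have := F1 Hc a; rewrite -mu opprK.
- by move=> h; apply: vo_ne; rewrite -mu h oppr0.
- move=> [h1 h2]; apply: nle; rewrite -mu; apply: (VP Hc); apply: Vt_opp.
  by split => //; move=> h; apply: vo_ne; rewrite -mu h oppr0.
Qed.

Lemma Hlem {G : zmodType} {le : G -> G -> Prop} (Hc : compatible_qo le) {o v : G} :
  ~ Vt le o -> Vt le v -> qlt le o v.
Proof.
move=> no Vv; apply: NNPP => nlt.
have lvo : le v o.
  case: (qtot Hc v o) => // h; apply: NNPP => n; apply: nlt; split => //.
  by move=> [_ ?].
have v0 := Vv.1.
case: (classic (o = 0)) => o0.
  by subst o; apply: v0; exact (q1 Hc lvo (VP Hc Vv)).
case: (qtot Hc 0 o) => l0; last first.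
  by apply: v0; exact (q1 Hc (qtr Hc lvo l0) (VP Hc Vv)).
have ng := notV_ns no o0.
case: (H0 Hc o v l0 ng Vv lvo) => vv nl l1 u0 nu.
have lou : le o (o + v) := nle_le Hc nl.
case: (H0 Hc (o + v) v l1 nu Vv (qtr Hc lvo lou)) => _ nl2 _ _ _.
by apply: nl2; rewrite -addrA vv addr0.
Qed.

Lemma upV {G : zmodType} {le : G -> G -> Prop} (Hc : compatible_qo le) {v w : G} :
  Vt le v -> le v w -> Vt le w.
Proof.
move=> Vv l; apply: NNPP => n; case: (Hlem Hc n Vv) => a b; apply: b; split => //.
Qed.

Lemma neg_lt {G : zmodType} {le : G -> G -> Prop} (Hc : compatible_qo le) {a b : G} :
  Vt le a -> qlt le b a -> qlt le (-b) a.
Proof.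
move=> Va [hba nba]; case: (classic (Vt le b)) => [[b0 [b1 b2]]|nVb].
  split; first exact (qtr Hc b2 hba).
  by move=> [h1 h2]; apply: nba; split => //; exact (qtr Hc h2 b2).
by apply: (Hlem Hc) => //; rewrite Vt_oppE.
Qed.

Lemma M1 {G : zmodType} {le : G -> G -> Prop} (Hc : compatible_qo le) {a b : G} :
  Vt le a -> qlt le b a -> le (a + b) a.
Proof.
move=> Va lba; have Va' := Va; case: Va' => a0 [a1 a2].
have [hnba nnba] := neg_lt Hc Va lba.
have n1 : ~ qsim le a (-b) by move=> [x y]; apply: nnba; split.
have n2 : ~ qsim le (-a) (-b).
  by move=> [x y]; apply: nnba; split => //; exact (qtr Hc a1 x).
have bn := bullet Hc (conj a1 a2) n2 n1.
apply: NNPP => n; have l1 := nle_le Hc n.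
have Vab := upV Hc Va l1.
have ns : ~ qsim le (a + b) (-b) by move=> [x y]; apply: n; exact (qtr Hc x hnba).
have := q2 Hc l1 ns; rewrite addrK => l2.
apply: n; apply: (qtr Hc _ l2).
case: Vab => _ [c1 c2]; apply: (qtr Hc c1); rewrite opprD.
by case: bn.
Qed.

Lemma M {G : zmodType} {le : G -> G -> Prop} (Hc : compatible_qo le) {a b : G} :
  Vt le a -> qlt le b a -> qsim le (a + b) a.
Proof.
move=> Va lba; have Va' := Va; case: Va' => a0 [a1 a2].
have [hba nba] := lba.
have [hnba nnba] := neg_lt Hc Va lba.
have n1 : ~ qsim le a b by move=> [x y]; apply: nba; split.
have n2 : ~ qsim le (-a) b.
  by move=> [x y]; apply: nba; split => //; exact (qtr Hc a1 x).
have bb := bullet Hc (conj a1 a2) n2 n1.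
split; first exact (M1 Hc Va lba).
apply: NNPP => n; have l2 := nle_le Hc n.
have ns : ~ qsim le a (-b) by move=> [x y]; apply: nnba; split.
have := q2 Hc l2 ns; rewrite addrK => l3.
have l4 := M1 Hc Va (neg_lt Hc Va lba).
have Vamb := upV Hc Va l3.
apply: n; apply: (qtr Hc l3); case: Vamb => _ [c1 c2]; apply: (qtr Hc c1).
by rewrite opprB addrC; case: bb.
Qed.

Lemma otypeE {G : zmodType} {le : G -> G -> Prop} (Hc : compatible_qo le) (x : G) :
  o_type le x <-> ~ Vt le x.
Proof.
split.
  move=> [sing nord] [x0 [l1 l2]].
  have e : - x = x by apply: sing; split.
  by apply: nord; split => //; rewrite -{1}e addNr.
move=> nV; split; first by move=> h; exact (S2 Hc nV).
move=> [x0 xx]; apply: nV; split => //.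
have e : x = - x by apply/eqP; rewrite -addr_eq0 xx.
by rewrite -e; split; exact (qrefl Hc x).
Qed.

Lemma vtypeE {G : zmodType} {le : G -> G -> Prop} (Hc : compatible_qo le) (x : G) :
  v_type le x <-> Vt le x.
Proof. rewrite /v_type (otypeE Hc); split; [exact: NNPP | tauto]. Qed.

Definition K {G : zmodType} (le : G -> G -> Prop) (a b : G) : Prop :=
  (a <> b /\ b = 0) \/ (Vt le a /\ qlt le b a)
  \/ (~ Vt le b /\ ~ Vt le a /\ qlt le 0 (a - b) /\ qlt le 0 a).

Lemma t1 (G : zmodType) (v x u z : G) : (v + x + u) - (v + z + u) = x - z.
Proof. by rewrite [v + z + u]addrC addrKA [v + x]addrC addrKA. Qed.
Lemma t2 (G : zmodType) (x y z : G) : (x - z) - (y - z) = x - y.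
Proof. by rewrite opprB addrA subrK. Qed.

Lemma CK {G : zmodType} {le : G -> G -> Prop} (Hc : compatible_qo le) (x y z : G) :
  Cind le x y z <-> K le (x - z) (y - z).
Proof.
rewrite /Cind /K !(vtypeE Hc) !(otypeE Hc) t2.
have e1 : (x - z = y - z) <-> (x = y) by split => [/addIr|->].
have e2 : (y - z = 0) <-> (y = z) by split => [/subr0_eq|->] //; rewrite subrr.
by rewrite e1 e2.
Qed.

Lemma CK0 {G : zmodType} {le : G -> G -> Prop} (Hc : compatible_qo le) (a b : G) :
  Cind le a b 0 <-> K le a b.
Proof. by rewrite (CK Hc) !subr0. Qed.

Lemma Llem {G : zmodType} {le : G -> G -> Prop} (Hc : compatible_qo le) {x y : G} :
  ~ Vt le x -> ~ Vt le y -> (le x y <-> le 0 (y - x)).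
Proof.
move=> nVx nVy; split.
  move=> hxy; case: (classic (x = 0)) => x0.
    by subst x; rewrite subr0.
  have nsx := notV_ns nVx x0.
  case: (classic (qsim le y (-x))) => qs.
    have nVmx : ~ Vt le (-x) by rewrite Vt_oppE.
    have e := S2 Hc nVmx qs; rewrite e in hxy *.
    case: (qtot Hc 0 x) => l.
      exfalso; apply: (nsx); split => //; exact (qtr Hc (F2 Hc l nsx) l).
    have [l2 n2] := two_neg Hc nVx l x0.
    by have := F1 Hc l2; rewrite opprD.
  by have := q2 Hc hxy qs; rewrite subrr.
move=> h; apply: NNPP => nxy; have lyx := nle_le Hc nxy.
case: (classic (x = 0)) => x0.
  by subst x; apply: nxy; rewrite subr0 in h.
have nsx := notV_ns nVx x0.
case: (classic (qsim le x (-y))) => qs.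
  case: (classic (y = 0)) => y0.
    subst y; rewrite oppr0 in qs; case: qs => a b; apply: x0; exact (q1 Hc a b).
  have nVmy : ~ Vt le (-y) by rewrite Vt_oppE.
  have e := S2 Hc nVmy qs; subst x.
  rewrite opprK in h.
  have nsy := notV_ns nVy y0.
  case: (qtot Hc 0 y) => l.
    by apply: nxy; exact (qtr Hc (F2 Hc l nsy) l).
  have [l2 n2] := two_neg Hc nVy l y0.
  by apply: n2; exact (q1 Hc l2 h).
have := q2 Hc lyx qs; rewrite subrr => h2.
case: (classic (y - x = 0)) => w0.
  by apply: nxy; rewrite (subr0_eq w0); exact (qrefl Hc x).
have Vw : Vt le (y - x).
  split => //; case: (classic (qsim le (y - x) (-(y - x)))) => // ns.
  exfalso; apply: w0; have := F2 Hc h ns; rewrite opprB => l.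
  by rewrite -opprB; apply/eqP; rewrite oppr_eq0; apply/eqP; exact (q1 Hc l h2).
have [l1 n1] := Hlem Hc nVy Vw.
have [l1' n1'] := Hlem Hc nVy (Vt_opp Vw).
have bb := bullet Hc (conj Vw.2.1 Vw.2.2) (fun q => n1' (conj q.2 q.1)) (fun q => n1 (conj q.2 q.1)).
rewrite opprB subrK in bb.
have e := S2 Hc nVx bb.
have [l3 n3] := Hlem Hc nVx Vw.
have := q2 Hc lyx n3.
rewrite [y + _]addrC e [x + _]addrC subrK => l4.
exact: nxy l4.
Qed.

Lemma K1 {G : zmodType} {le : G -> G -> Prop} (Hc : compatible_qo le) (a b : G) :
  K le a b -> K le (a - b) (-b).
Proof.
case=> [[ab b0] | [[Va lba] | [nVb [nVa [l1 l2]]]]].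
- left; rewrite b0 oppr0 addr0; split => //; by rewrite b0 in ab.
- right; left; have lnb := neg_lt Hc Va lba.
  have ms := M Hc Va lnb.
  split; first exact (upV Hc Va ms.2).
  exact (qlt_le_trans Hc lnb ms.2).
- case: (classic (Vt le (a - b))) => V2.
    right; left; split => //; apply: (Hlem Hc) => //; by rewrite Vt_oppE.
  right; right; split; first by rewrite Vt_oppE.
  by split => //; rewrite opprK subrK.
Qed.

Lemma qlt_irr {G : zmodType} {le : G -> G -> Prop} (Hc : compatible_qo le) (a : G) :
  ~ qlt le a a.
Proof. by move=> [_ n]; apply: n; split; exact (qrefl Hc a). Qed.

Lemma K2 {G : zmodType} {le : G -> G -> Prop} (Hc : compatible_qo le) (a b : G) :
  K le a b -> ~ K le b a.
Proof.
case=> [[ab b0] | [[Va lba] | [nVb [nVa [l1 l2]]]]].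
- subst b; case=> [[_ a0] | [[[V0 _] _] | [_ [_ [_ l]]]]].
  + exact: ab a0.
  + exact: V0.
  + exact: (qlt_irr Hc _ l).
- case=> [[_ a0] | [[_ lab] | [nVa _]]].
  + exact: Va.1 a0.
  + case: lab => x _; case: lba => y n; apply: n; split => //.
  + exact: nVa Va.
- case=> [[_ a0] | [[Vb _] | [_ [_ [l3 _]]]]].
  + by subst a; exact: (qlt_irr Hc _ l2).
  + exact: nVb Vb.
  + have h1 := (Llem Hc nVb nVa).2 ((qlt0E Hc _).1 l1).1.
    have h2 := (Llem Hc nVa nVb).2 ((qlt0E Hc _).1 l3).1.
    have e := S2 Hc nVb (conj h2 h1); subst a.
    by rewrite subrr in l1; exact: (qlt_irr Hc _ l1).
Qed.

Lemma K3 {G : zmodType} {le : G -> G -> Prop} (Hc : compatible_qo le) (a b c : G) :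
  K le a b -> K le c b \/ K le a c.
Proof.
case=> [[ab b0] | [[Va lba] | [nVb [nVa [l1 l2]]]]].
- case: (classic (c = 0)) => c0.
    by subst; right; left; split.
  by left; left; subst; split.
- case: (classic (qlt le c a)) => h.
    by right; right; left.
  have lac := (nqlt_le Hc a c).1 h.
  left; right; left; split; first exact (upV Hc Va lac).
  exact (qlt_le_trans Hc lba lac).
- case: (classic (Vt le c)) => Vc.
    by left; right; left; split => //; exact (Hlem Hc nVb Vc).
  case: (classic (c = 0)) => c0.
    subst c; right; left; split => // e; subst a.
    by apply: (qlt_irr Hc _ l2).
  case: (classic (qlt le 0 (a - c))) => h.
    by right; right; right.
  case: (classic (a = c)) => ac.
    by subst c; left; right; right.
  have nl : ~ le 0 (a - c).
    move=> l; apply: h; apply/(qlt0E Hc); split => // /subr0_eq; exact: ac.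
  have ncl : ~ le c a by move=> l; apply: nl; exact ((Llem Hc Vc nVa).1 l).
  have lac := nle_le Hc ncl.
  have lba := (Llem Hc nVb nVa).2 ((qlt0E Hc _).1 l1).1.
  have lbc := qtr Hc lba lac.
  left; right; right; split => //; split => //; split.
    apply/(qlt0E Hc); split; first exact ((Llem Hc nVb Vc).1 lbc).
    by move=> /subr0_eq E; apply: ncl; rewrite E.
  apply/(qlt0E Hc); split; last by [].
  exact (qtr Hc ((qlt0E Hc _).1 l2).1 lac).
Qed.

Lemma VCE {G : zmodType} {le : G -> G -> Prop} (Hc : compatible_qo le) (t : G) :
  Vt le t <-> t <> 0 /\ ~ Cind le t (-t) 0 /\ ~ Cind le (-t) t 0.
Proof.
rewrite !(CK0 Hc); split.
  move=> Vt0; have Vt1 := Vt0; case: Vt1 => t0 [l1 l2]; split => //; split.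
    case=> [[_ e] | [[_ [_ ns]] | [_ [nV _]]]].
    + by apply: t0; rewrite -[t]opprK e oppr0.
    + by apply: ns; split.
    + exact: nV Vt0.
  case=> [[_ e] | [[_ [_ ns]] | [_ [nV _]]]].
  + exact: t0 e.
  + by apply: ns; split.
  + exact: nV (Vt_opp Vt0).
move=> [t0 [n1 n2]]; apply: NNPP => nV.
have ns := notV_ns nV t0.
have nV' : ~ Vt le (-t) by rewrite Vt_oppE.
have mt0 : -t <> 0 by move=> e; apply: t0; rewrite -[t]opprK e oppr0.
case: (qtot Hc 0 t) => l.
  apply: n1; right; right; split => //; split => //; rewrite opprK.
  have [a b] := two_pos Hc nV l t0.
  by split; apply/(qlt0E Hc).
apply: n2; right; right; split => //; split => //.
have l' := F1 Hc l.
have [a b] := two_pos Hc nV' l' mt0.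
by split; apply/(qlt0E Hc).
Qed.

Lemma NE {G : zmodType} {le : G -> G -> Prop} (Hc : compatible_qo le) (d : G) :
  qlt le d 0 <-> Cind le (-d) d 0.
Proof.
rewrite (CK0 Hc); split.
  move=> [ld nd].
  have d0 : d <> 0 by move=> e; apply: nd; rewrite e; split; exact (qrefl Hc 0).
  have nVd : ~ Vt le d by move=> V; apply: nd; split => //; exact (VP Hc V).
  have nV' : ~ Vt le (-d) by rewrite Vt_oppE.
  have mt0 : -d <> 0 by move=> e; apply: d0; rewrite -[d]opprK e oppr0.
  have l' := F1 Hc ld.
  have [a b] := two_pos Hc nV' l' mt0.
  by right; right; split => //; split => //; split; apply/(qlt0E Hc).
case=> [[ne e] | [[Vmd [_ ns]] | [nVd [nVmd [_ l2]]]]].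
- by exfalso; apply: ne; rewrite e oppr0.
- by exfalso; case: Vmd => _; rewrite opprK => -[x y]; apply: ns; split.
- have [a b] := (qlt0E Hc _).1 l2.
  have ns := notV_ns nVmd b.
  have := F2 Hc a ns; rewrite opprK => l.
  split => // -[x y]; apply: b; rewrite (q1 Hc l y) oppr0 //.
Qed.

Lemma KVx {G : zmodType} {le : G -> G -> Prop} (Hc : compatible_qo le) (x y : G) :
  Vt le x -> (Cind le x y 0 <-> qlt le y x).
Proof.
move=> Vx; rewrite (CK0 Hc); split.
  case=> [[ne e] | [[_ h] | [_ [nV _]]]].
  - subst y; apply/(qlt0E Hc); split; first exact (VP Hc Vx).
    by move=> e; apply: ne.
  - exact: h.
  - by exfalso; exact: (nV Vx).
by move=> h; right; left.
Qed.

Definition tsub (a b : term) : term := TAdd a (TOpp b).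

Definition fV (t : term) : qf atomLe :=
  QAnd (QNot (QAtom (LEq t TZero))) (QAnd (QAtom (LLe t (TOpp t))) (QAtom (LLe (TOpp t) t))).
Definition flt (a b : term) : qf atomLe :=
  QAnd (QAtom (LLe a b)) (QNot (QAnd (QAtom (LLe a b)) (QAtom (LLe b a)))).
Definition phi0 : qf atomLe :=
  QOr (QAnd (QNot (QAtom (LEq (TVar 0) (TVar 1)))) (QAtom (LEq (TVar 1) (TVar 2))))
  (QOr (QAnd (fV (tsub (TVar 0) (TVar 2))) (flt (tsub (TVar 1) (TVar 2)) (tsub (TVar 0) (TVar 2))))
   (QAnd (QNot (fV (tsub (TVar 1) (TVar 2))))
     (QAnd (QNot (fV (tsub (TVar 0) (TVar 2))))
       (QAnd (flt TZero (tsub (TVar 0) (TVar 1))) (flt TZero (tsub (TVar 0) (TVar 2))))))).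

Lemma phiE {G : zmodType} {le : G -> G -> Prop} (Hc : compatible_qo le) (x y z : G) :
  Cind le x y z <-> qf_holds (semLe le (env [:: x; y; z])) phi0.
Proof.
rewrite /Cind !(vtypeE Hc) !(otypeE Hc) /=.
reflexivity.
Qed.

Definition cV (t : term) : qf atomC :=
  QAnd (QNot (QAtom (CEq t TZero)))
    (QAnd (QNot (QAtom (CC t (TOpp t) TZero))) (QNot (QAtom (CC (TOpp t) t TZero)))).
Definition psi0 : qf atomC :=
  QOr (QAnd (cV (TVar 0)) (QNot (QAtom (CC (TVar 0) (TVar 1) TZero))))
  (QOr (QAnd (QNot (cV (TVar 0))) (cV (TVar 1)))
   (QAnd (QNot (cV (TVar 0))) (QAnd (QNot (cV (TVar 1)))
      (QNot (QAtom (CC (tsub (TVar 0) (TVar 1)) (tsub (TVar 1) (TVar 0)) TZero)))))).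

Lemma psiE {G : zmodType} {le : G -> G -> Prop} (Hc : compatible_qo le) (x y : G) :
  le x y <-> qf_holds (semC (Cind le) (env [:: x; y])) psi0.
Proof.
rewrite /=.
have ex := VCE Hc x; have ey := VCE Hc y.
have en : qlt le (y - x) 0 <-> Cind le (x - y) (y - x) 0 by rewrite (NE Hc) opprB.
have nq := nqlt_le Hc x y.
case: (classic (Vt le x)) => Vx.
  have kx := KVx Hc x y Vx; tauto.
case: (classic (Vt le y)) => Vy.
  have [l _] := Hlem Hc Vx Vy; tauto.
have L := Llem Hc Vx Vy.
have nq0 := nqlt_le Hc 0 (y - x).
tauto.
Qed.

Lemma qf_ext {G : zmodType} (C1 C2 : G -> G -> G -> Prop) (e : nat -> G) :
  (forall a b c, C1 a b c <-> C2 a b c) ->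
  forall f, qf_holds (semC C1 e) f <-> qf_holds (semC C2 e) f.
Proof.
move=> E; elim=> [[t1 t2|t1 t2 t3]|f IH|f1 IH1 f2 IH2|f1 IH1 f2 IH2] /=.
- reflexivity.
- exact: E.
- by rewrite IH.
- by rewrite IH1 IH2.
- by rewrite IH1 IH2.
Qed.

Theorem mainTheorem18 (G : zmodType) (le : G -> G -> Prop) :
  compatible_qo le ->
  [/\ C_relation (Cind le),
      C_compatible (Cind le),
      (forall le' : G -> G -> Prop, compatible_qo le' ->
         (forall x y z, Cind le' x y z <-> Cind le x y z) ->
         forall x y, le' x y <-> le x y),
      (exists phi : qf atomLe, forall x y z : G,
         Cind le x y z <-> qf_holds (semLe le (env [:: x; y; z])) phi)
    & (exists psi : qf atomC, forall x y : G,
         le x y <-> qf_holds (semC (Cind le) (env [:: x; y])) psi)].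
Proof.
move=> Hc; split.
- split.
  + move=> x y z; rewrite !(CK Hc) => h.
    by have := K1 Hc _ _ h; rewrite t2 opprB.
  + move=> x y z; rewrite !(CK Hc); exact: K2 Hc _ _.
  + move=> x y z w; rewrite !(CK Hc); exact: K3 Hc _ _ _.
  + by move=> x y xy; left; split.
- by move=> x y z u v; rewrite !(CK Hc) !t1.
- move=> le' Hc' E x y; rewrite (psiE Hc) (psiE Hc'); exact: qf_ext.
- by exists phi0; exact: phiE Hc.
- by exists psi0; exact: psiE Hc.
Qed.
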